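(* Let $\lambda/\mu$ be a connected r-shape with column flags $\mathbf a,\mathbf b$, and let $\Theta=(\theta_1,\ldots,\theta_k)$ be an outer ribbon decomposition of $\lambda/\mu$. For every $i,j$ such that $\theta_i\#\theta_j$ is defined and nonempty, the induced ribbon flags $\mathbf a^{ij},\mathbf b^{ij}$ are column flags for the r-shape $\theta_i\#\theta_j$.
   Context: Young diagrams in English notation; $\mathrm{row}(\gamma),\mathrm{col}(\gamma)$ the row and column of a cell. An r-shape is $(\lambda/\mu,r)$, $r\in\mathbb Z$, with shifted contents $c(i,j)=j-i+r-1+\lambda'_1$ (bottom-left cell content $r$); connected means edgewise connected diagram. Column flags for an r-shape $\kappa/\nu$ with $N\ge\kappa_1$: $\mathbf a,\mathbf b\in\mathbb Z^N$ with $a_i-a_{i+1}\le\nu'_i-\nu'_{i+1}+1$ and $b_i-b_{i+1}\le\kappa'_i-\kappa'_{i+1}+1$ whenever $\nu'_i<\kappa'_{i+1}$. A ribbon is an edgewise connected skew diagram with no $2\times2$ block; head = bottom-left cell, tail = top-right cell. A cell of $\lambda/\mu$ is on the top (right, bottom, left) perimeter if the cell directly above (right, below, left) is not in $\lambda/\mu$. An outer ribbon decomposition $(\theta_1,\ldots,\theta_k)$ of $\lambda/\mu$ partitions its cells into ribbons with each head on the left or bottom perimeter and each tail on the top or right perimeter. A cell $\gamma\in\theta_i$ goes up if the cell directly above is in $\theta_i$ or $\gamma$ is the tail of $\theta_i$ on the top perimeter; goes right if the cell directly to its right is in $\theta_i$ or $\gamma$ is the tail of $\theta_i$ on the right perimeter;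 the top-right cell of $\lambda/\mu$ (in $\theta_i$) goes up if the cell directly below is in $\theta_i$ and right if the cell directly to its left is in $\theta_i$. All cells of a given content go in the same direction. The cutting strip is the ribbon whose cells have exactly the contents occurring in $\lambda/\mu$, with the cell of content $c+1$ directly above (resp. right of) that of content $c$ when the cells of content $c$ go up (resp. right). $\Theta(p,q)$ is its sub-ribbon of contents in $[p,q]$, an r-shape with root content $p$; it is $\varnothing$ if $p=q+1$ and undefined if $p>q+1$. $\theta_i\#\theta_j=\Theta(c(\delta_i),c(\gamma_j))$ with $\delta_i$ the head of $\theta_i$, $\gamma_j$ the tail of $\theta_j$. Canonical decomposition: $\theta=\rho_1\to\cdots\to\rho_K$ with $\rho_r$ the maximal vertical strips (column segments) of $\theta$ from left to right. Induced ribbon flags of $\theta_i\#\theta_j=\rho_1\to\cdots\to\rho_K$: with $\delta_r,\gamma_r$ the bottom and top cells of $\rho_r$, $M_r$ the rightmost cell of $\lambda/\mu$ of content $c(\delta_r)$, $m_r$ the leftmost cell of $\lambda/\mu$ of content $c(\gamma_r)$ (rows/columns measured in $\lambda/\mu$): $a^{ij}_r=a_{\mathrm{col}(m_r)}-(\mu'_{\mathrm{col}(m_r)}+1)+\mathrm{row}(m_r)$, $b^{ij}_r=b_{\mathrm{col}(M_r)}-\lambda'_{\mathrm{col}(M_r)}+\mathrm{row}(M_r)$. *)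

(* Defs.v *)
From mathcomp Require Import all_boot all_order all_algebra.
Set Implicit Arguments. Unset Strict Implicit. Unset Printing Implicit Defensive.
Import Order.TTheory GRing.Theory Num.Theory.

(* Cells are pairs (row, column), 1-indexed, English notation. *)
Definition cell := (nat * nat)%type.

(* A partition is a weakly decreasing sequence of naturals;
   lambda_i = nth 0 la (i-1).  Trailing zeros are harmless. *)
Definition is_partition (la : seq nat) : Prop := sorted geq la.

Definition subpart (mu la : seq nat) : Prop :=
  forall i, (nth 0 mu i <= nth 0 la i)%N.

Definition conj (la : seq nat) (j : nat) : nat := count (fun x => j <= x)%N la.

Definition in_skew (la mu : seq nat) (x : cell) : bool :=
  (0 < x.1)%N && (nth 0 mu x.1.-1 < x.2 <= nth 0 la x.1.-1)%N.

Definition cells (la mu : seq nat) : seq cell :=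
  [seq x <- [seq (i, j) | i <- iota 1 (size la), j <- iota 1 (nth 0 la i.-1)]
     | in_skew la mu x].

Definition cont (ka : seq nat) (r : int) (x : cell) : int :=
  (x.2%:Z - x.1%:Z + r - 1 + (conj ka 1)%:Z)%R.

Definition adj : rel cell := fun x y =>
  ((x.1 == y.1) && ((x.2 == y.2.+1) || (y.2 == x.2.+1))) ||
  ((x.2 == y.2) && ((x.1 == y.1.+1) || (y.1 == x.1.+1))).

Definition edge_connected (S : pred cell) : Prop :=
  forall x y, S x -> S y ->
    exists s : seq cell, [/\ path adj x s, last x s = y & all S s].

Definition connected_skew (la mu : seq nat) : Prop :=
  edge_connected (in_skew la mu).

(* Column flags for the r-shape ka/nu, a, b in Z^N (indices 1..N). *)
Definition column_flags (ka nu : seq nat) (N : nat) (a b : nat -> int) : Prop :=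
  forall i, (1 <= i)%N -> (i < N)%N -> (conj nu i < conj ka i.+1)%N ->
    (a i - a i.+1 <= (conj nu i)%:Z - (conj nu i.+1)%:Z + 1)%R /\
    (b i - b i.+1 <= (conj ka i)%:Z - (conj ka i.+1)%:Z + 1)%R.

Definition is_skew_diagram (S : pred cell) : Prop :=
  exists ka nu, [/\ is_partition ka, is_partition nu, subpart nu ka &
                    forall x, S x = in_skew ka nu x].

Definition no_2x2 (S : pred cell) : Prop :=
  forall i j, ~~ [&& S (i, j), S (i.+1, j), S (i, j.+1) & S (i.+1, j.+1)].

Definition is_ribbon (S : pred cell) : Prop :=
  [/\ edge_connected S, no_2x2 S & is_skew_diagram S].

(* head = bottom-left cell (leftmost column, lowest in it);
   tail = top-right cell (rightmost column, highest in it).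
   Stated for sets of cells contained in la/mu. *)
Definition is_head (la mu : seq nat) (th : pred cell) (x : cell) : bool :=
  th x && all (fun y => th y ==> ((x.2 < y.2) || ((x.2 == y.2) && (y.1 <= x.1))))%N
              (cells la mu).

Definition is_tail (la mu : seq nat) (th : pred cell) (x : cell) : bool :=
  th x && all (fun y => th y ==> ((y.2 < x.2) || ((x.2 == y.2) && (x.1 <= y.1))))%N
              (cells la mu).

Definition top_per (la mu : seq nat) (x : cell) := ~~ in_skew la mu (x.1.-1, x.2).
Definition right_per (la mu : seq nat) (x : cell) := ~~ in_skew la mu (x.1, x.2.+1).
Definition bottom_per (la mu : seq nat) (x : cell) := ~~ in_skew la mu (x.1.+1, x.2).
Definition left_per (la mu : seq nat) (x : cell) := ~~ in_skew la mu (x.1, x.2.-1).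

Definition Th_at (Th : seq (pred cell)) (i : nat) : pred cell :=
  nth (fun _ => false) Th i.

(* outer ribbon decomposition (theta_1, ..., theta_k) = Th (0-indexed list) *)
Definition outer_ribbon_decomposition (la mu : seq nat) (Th : seq (pred cell)) : Prop :=
  [/\ forall i, (i < size Th)%N ->
        let th := Th_at Th i in
        [/\ is_ribbon th,
            forall x, th x -> in_skew la mu x,
            exists d, is_head la mu th d && (left_per la mu d || bottom_per la mu d) &
            exists g, is_tail la mu th g && (top_per la mu g || right_per la mu g)],
      forall x, in_skew la mu x -> exists2 i, (i < size Th)%N & Th_at Th i x &
      forall i i' x, (i < size Th)%N -> (i' < size Th)%N ->
        Th_at Th i x -> Th_at Th i' x -> i = i'].

(* direction of a cell x of the ribbon th (true = goes up) *)
Definition goes_up (la mu : seq nat) (th : pred cell) (x : cell) : bool :=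
  if is_tail la mu (in_skew la mu) x
  then th (x.1.+1, x.2)
  else th (x.1.-1, x.2) || (is_tail la mu th x && top_per la mu x).

(* cells of content c go up (all cells of a given content go the same way;
   we say content c goes up when some cell of content c goes up) *)
Definition content_up (la mu : seq nat) (r : int) (Th : seq (pred cell)) (c : int) : bool :=
  has (fun th => has (fun x => th x && (cont la r x == c) && goes_up la mu th x)
                     (cells la mu)) Th.

(* The sub-ribbon Theta(p,q) of the cutting strip, for p <= q, placed
   minimally: rows 1..R, columns 1..K, head at (R,1), tail at (1,K).
   Step t (0 <= t <= n, n = q - p) is the cell of content p + t. *)
Section Strip.
Variables (la mu : seq nat) (r : int) (Th : seq (pred cell)) (p q : int).

Definition strip_len : nat := `|q - p|%N.
Definition strip_up (t : nat) : bool := content_up la mu r Th (p + t%:Z)%R.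
Definition strip_U (t : nat) : nat := count strip_up (iota 0 t).
Definition strip_R : nat := (strip_U strip_len).+1.
Definition strip_K : nat := (strip_len - strip_U strip_len).+1.
Definition strip_cell (t : nat) : cell := (strip_R - strip_U t, (t - strip_U t).+1)%N.
Definition strip_cells : seq cell := map strip_cell (iota 0 strip_len.+1).
(* outer and inner partitions kappa, nu with Theta(p,q) = kappa/nu *)
Definition strip_kappa : seq nat :=
  [seq \max_(x <- strip_cells | x.1 == i) x.2 | i <- iota 1 strip_R].
Definition strip_nu : seq nat :=
  [seq (\big[minn/strip_K]_(x <- strip_cells | x.1 == i) x.2).-1 | i <- iota 1 strip_R].
End Strip.

Definition leftmost_of_content (la mu : seq nat) (r c : int) (m : cell) : Prop :=
  [/\ in_skew la mu m, cont la r m = c &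
      forall y, in_skew la mu y -> cont la r y = c -> (m.2 <= y.2)%N].
Definition rightmost_of_content (la mu : seq nat) (r c : int) (M : cell) : Prop :=
  [/\ in_skew la mu M, cont la r M = c &
      forall y, in_skew la mu y -> cont la r y = c -> (y.2 <= M.2)%N].

(* a', b' are the induced ribbon flags of Theta(p,q) = rho_1 -> ... -> rho_K:
   rho_r is column r of kappa/nu, with bottom cell delta_r = (kappa'_r, r)
   and top cell gamma_r = (nu'_r + 1, r); contents are those of the r-shape
   Theta(p,q) with root content p. *)
Definition induced_flags (la mu : seq nat) (r : int) (Th : seq (pred cell))
    (a b : nat -> int) (p q : int) (a' b' : nat -> int) : Prop :=
  let ka := strip_kappa la mu r Th p q in
  let nu := strip_nu la mu r Th p q in
  forall s, (1 <= s <= strip_K la mu r Th p q)%N ->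
    forall m M,
      leftmost_of_content la mu r (cont ka p ((conj nu s).+1, s)) m ->
      rightmost_of_content la mu r (cont ka p (conj ka s, s)) M ->
      a' s = (a m.2 - ((conj mu m.2)%:Z + 1) + m.1%:Z)%R /\
      b' s = (b M.2 - (conj la M.2)%:Z + M.1%:Z)%R.

(* Main.v *)
Require Import Defs.
From mathcomp Require Import all_boot all_order all_algebra.
From mathcomp Require Import zify.
Import Order.TTheory GRing.Theory Num.Theory.


Definition gU (up : nat -> bool) (t : nat) : nat := count up (iota 0 t).

Lemma gUS up t : gU up t.+1 = gU up t + up t.
Proof. by rewrite /gU -addn1 iotaD count_cat /= add0n addn0. Qed.

Lemma gU_le up t : gU up t <= t.
Proof. by rewrite /gU (leq_trans (count_size _ _)) // size_iota. Qed.

Lemma gU_mono up {t1 t2} : t1 <= t2 -> gU up t1 <= gU up t2.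
Proof.
move=> /subnK <-; elim: (t2 - t1) => [|n IH]; first by [].
rewrite addSn gUS; apply: (leq_trans IH); exact: leq_addr.
Qed.

Lemma gcol_mono up {t1 t2} : t1 <= t2 -> t1 - gU up t1 <= t2 - gU up t2.
Proof.
move=> /subnK <-; elim: (t2 - t1) => [|n IH]; first by [].
rewrite addSn gUS; have := gU_le up (n + t1); case: (up (n+t1)) => /=; lia.
Qed.

Lemma ivt (f : nat -> nat) a b v :
  (forall t, f t <= f t.+1 <= (f t).+1) -> a <= b -> f a <= v <= f b ->
  exists2 t, a <= t <= b & f t = v.
Proof.
move=> hf ab; elim: b ab => [|b IH] ab.
  have -> : a = 0 by lia. move=> hv; exists 0 => //; lia.
move=> hv; case: (leqP v (f b)) => hvb.
  case: (leqP a b) => hab.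
    have [t ht htv] := IH hab ltac:(lia). exists t => //; lia.
  have eab : a = b.+1 by lia. rewrite eab in hv. exists b.+1 => //; lia.
exists b.+1; first by rewrite ab leqnn.
have := hf b; lia.
Qed.

Lemma bigmax_has (T : Type) (l : seq T) (P : pred T) (F : T -> nat) s :
  0 < s -> (s <= \max_(x <- l | P x) F x) = has (fun x => P x && (s <= F x)) l.
Proof.
move=> s0; elim: l => [|x l IH]; first by rewrite big_nil /= leqNgt s0.
rewrite big_cons /=; case: (P x) => /=; last exact: IH.
by rewrite leq_max IH.
Qed.

Lemma bigmin_all (T : Type) (l : seq T) (P : pred T) (F : T -> nat) s K :
  (s < \big[minn/K]_(x <- l | P x) F x) = (s < K) && all (fun x => P x ==> (s < F x)) l.
Proof.
elim: l => [|x l IH]; first by rewrite big_nil /= andbT.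
rewrite big_cons /=; case: (P x) => /=; last exact: IH.
rewrite leq_min IH; by case: (s < F x); case: (s < K).
Qed.

Lemma count_le X R : X <= R -> count (fun i => i <= X) (iota 1 R) = X.
Proof.
elim: R => [|R IH] hX; first by rewrite leqn0 in hX; move/eqP: hX => ->.
rewrite -[R.+1]addn1 iotaD count_cat /= add1n addn0.
case: (leqP X R) => h.
  by rewrite IH // addn0.
have -> : X = R.+1 by lia.
rewrite addn1; congr (_.+1).
rewrite -[RHS](size_iota 1 R); apply/eqP; rewrite -all_count; apply/allP => i.
rewrite mem_iota; lia.
Qed.

Definition gR up L := (gU up L).+1.
Definition gK up L := (L - gU up L).+1.
Definition gcell up L t : cell := (gR up L - gU up t, (t - gU up t).+1).
Definition gcells up L := map (gcell up L) (iota 0 L.+1).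
Definition gkappa up L : seq nat :=
  [seq \max_(x <- gcells up L | x.1 == i) x.2 | i <- iota 1 (gR up L)].
Definition gnu up L : seq nat :=
  [seq (\big[minn/gK up L]_(x <- gcells up L | x.1 == i) x.2).-1 | i <- iota 1 (gR up L)].

Lemma gcolS up t : t.+1 - gU up t.+1 <= (t - gU up t).+1.
Proof. rewrite gUS; have := gU_le up t; case: (up t) => /=; lia. Qed.

Lemma gUS1 up t : gU up t.+1 <= (gU up t).+1.
Proof. rewrite gUS; case: (up t) => /=; lia. Qed.

Lemma gU_step up t : gU up t <= gU up t.+1 <= (gU up t).+1.
Proof. by rewrite gU_mono ?leqnSn ?gUS1. Qed.

Lemma conj_gkappa up L s t : 0 < s -> t <= L -> (t - gU up t).+1 = s ->
  (forall t', t' < t -> (t' - gU up t').+1 < s) ->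
  conj (gkappa up L) s = gR up L - gU up t.
Proof.
move=> s0 tL ct tmin.
rewrite /conj /gkappa count_map.
have hUL := gU_mono up tL.
rewrite -[RHS](@count_le (gR up L - gU up t) (gR up L)); last lia.
apply: eq_in_count => i; rewrite mem_iota => hi /=.
rewrite /gcells big_map bigmax_has //.
apply/hasP/idP.
  move=> [t' ]; rewrite mem_iota => ht' /andP [/eqP <- hs] /=.
  rewrite /gcell /= in hs *.
  have tt' : t <= t'. rewrite leqNgt; apply/negP => /tmin; lia.
  have := gU_mono up tt'; lia.
move=> hi2.
have [t' ht' hU] := @ivt (gU up) t L (gR up L - i)
  (gU_step up) tL ltac:(rewrite /gR in hi hi2 *; lia).
exists t'; first by rewrite mem_iota; lia.
apply/andP; split; first by apply/eqP; rewrite /gcell /= hU; rewrite /gR in hi *; lia.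
have := gcol_mono up (proj1 (andP ht')); rewrite /gcell /=; lia.
Qed.

Lemma conj_gnu up L s t : 0 < s -> t <= L -> (t - gU up t).+1 = s ->
  (forall t', t < t' <= L -> s < (t' - gU up t').+1) ->
  conj (gnu up L) s = gR up L - gU up t - 1.
Proof.
move=> s0 tL ct tmax. have U0 : gU up 0 = 0 by [].
rewrite /conj /gnu count_map.
have hUL := gU_mono up tL.
rewrite -[RHS](@count_le (gR up L - gU up t - 1) (gR up L)); last lia.
apply: eq_in_count => i; rewrite mem_iota => hi /=.
have -> : (s <= (\big[minn/gK up L]_(x <- gcells up L | x.1 == i) x.2).-1) =
          (s < \big[minn/gK up L]_(x <- gcells up L | x.1 == i) x.2).
  case: (\big[minn/gK up L]_(x <- gcells up L | x.1 == i) x.2) => [|n] /=; lia.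
rewrite /gcells big_map bigmin_all.
have [tLe|tLt] := eqVneq t L.
  subst t; rewrite /gK ct ltnn /=; rewrite /gR in hi *; lia.
have sK : s < gK up L.
  have := tmax L ltac:(lia); rewrite /gK; lia.
rewrite sK andTb.
apply/allP/idP.
  move=> hall; rewrite leqNgt; apply/negP => hi2.
  have [t' ht' hU] := @ivt (gU up) 0 t (gR up L - i)
    (gU_step up) (leq0n t) ltac:(rewrite /gR in hi hi2 *; lia).
  have := hall t' ltac:(rewrite mem_iota; lia).
  rewrite /gcell /= hU.
  have -> : (gR up L - (gR up L - i) == i) by apply/eqP; rewrite /gR in hi *; lia.
  have := gcol_mono up (proj2 (andP ht')); lia.
move=> hi2 t'; rewrite mem_iota => ht'; apply/implyP; rewrite /gcell /= => /eqP hrow.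
have tt' : t < t'.
  rewrite ltnNge; apply/negP => /(gU_mono up); rewrite /gR in hrow hi2 *; lia.
apply: tmax; lia.
Qed.

Lemma amin_ex up L s : 0 < s -> s <= gK up L ->
  exists t, [/\ t <= L, (t - gU up t).+1 = s &
                forall t', t' < t -> (t' - gU up t').+1 < s].
Proof.
move=> s0 sK.
have exP : exists t, s <= (t - gU up t).+1 by exists L.
case: (ex_minnP exP) => t ht tmin.
have tL : t <= L by apply: tmin.
exists t; split => //; last first.
  by move=> t' lt; rewrite ltnNge; apply/negP => /tmin; lia.
case: t ht tmin tL => [|t] ht tmin tL; first by rewrite /= in ht *; lia.
have := gcolS up t.
have : ~~ (s <= (t - gU up t).+1) by apply/negP => /tmin; lia.
lia.
Qed.

Lemma bmax_ex up L s : 0 < s -> s <= gK up L ->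
  exists t, [/\ t <= L, (t - gU up t).+1 = s &
                forall t', t < t' <= L -> s < (t' - gU up t').+1].
Proof.
move=> s0 sK.
pose P := fun t => (t <= L) && ((t - gU up t).+1 <= s).
have exP : exists t, P t by exists 0; rewrite /P /=; lia.
have ubP : forall t, P t -> t <= L by move=> t /andP [].
case: (ex_maxnP exP ubP) => t /andP [tL ht] tmax.
exists t; split => //; last first.
  move=> t' /andP [lt lt']; rewrite ltnNge; apply/negP => h.
  have := tmax t' ltac:(rewrite /P lt' h //); lia.
have [eL|tL'] := eqVneq t L; first by subst t; rewrite /gK in sK; lia.
have := gcolS up t.
have : ~~ P t.+1 by apply/negP => /tmax; lia.
rewrite /P; lia.
Qed.

Lemma gcol_lt up t1 t2 : (t1 - gU up t1).+1 < (t2 - gU up t2).+1 -> t1 < t2.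
Proof. move=> h; rewrite ltnNge; apply/negP => /(gcol_mono up); lia. Qed.

Lemma conj_gkappa1 up L : conj (gkappa up L) 1 = gR up L.
Proof.
have U0 : gU up 0 = 0 by [].
rewrite (@conj_gkappa up L 1 0) ?U0 ?subn0 //.
Qed.

Lemma gtop up L s : 0 < s -> s <= gK up L ->
  exists t, [/\ t <= L, (t - gU up t).+1 = s & ((conj (gnu up L) s).+1, s) = gcell up L t].
Proof.
move=> s0 sK; have [t [tL ct tmax]] := @bmax_ex up L s s0 sK.
exists t; split => //.
rewrite (@conj_gnu up L s t s0 tL ct tmax) /gcell ct; congr (_, _).
have := gU_mono up tL; rewrite /gR; lia.
Qed.

Lemma gbot up L s : 0 < s -> s <= gK up L ->
  exists t, [/\ t <= L, (t - gU up t).+1 = s & (conj (gkappa up L) s, s) = gcell up L t].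
Proof.
move=> s0 sK; have [t [tL ct tmin]] := @amin_ex up L s s0 sK.
exists t; split => //.
by rewrite (@conj_gkappa up L s t s0 tL ct tmin) /gcell ct.
Qed.

Lemma gcont up L p t : t <= L -> cont (gkappa up L) p (gcell up L t) = (p + t%:Z)%R.
Proof.
move=> tL; rewrite /cont conj_gkappa1 /gcell /gR /=.
have := gU_mono up tL; have := gU_le up t; lia.
Qed.

Lemma geq_trans : transitive geq.
Proof. move=> x y z /= h1 h2; exact: leq_trans h2 h1. Qed.

Lemma part_nth_mono la i j : is_partition la -> i <= j -> nth 0 la j <= nth 0 la i.
Proof.
move=> hla ij.
case: (leqP (size la) j) => hj; first by rewrite nth_default.
have := @sorted_leq_nth _ geq geq_trans (fun x => leqnn x) 0 la hla i j.
rewrite !inE => h; apply: h => //; lia.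
Qed.

Lemma conj_nth la k i : is_partition la -> 0 < k -> (i < conj la k) = (k <= nth 0 la i).
Proof.
rewrite /is_partition /conj.
elim: la i => [|x l IH] i hs k0; first by rewrite /= nth_nil; lia.
have hl := path_sorted hs.
have hall := order_path_min geq_trans hs.
rewrite /=; case: i => [|i] /=.
  case hk: (k <= x) => //=.
  have -> : count (fun x0 => k <= x0) l = 0.
    apply/eqP; rewrite -leqn0 leqNgt -has_count; apply/hasP => [[y yl hy]].
    have := allP hall y yl; rewrite /=; lia.
  by [].
case hk: (k <= x) => /=.
  by rewrite add1n ltnS IH.
rewrite add0n.
have -> : count (fun x0 => k <= x0) l = 0.
  apply/eqP; rewrite -leqn0 leqNgt -has_count; apply/hasP => [[y yl hy]].
  have := allP hall y yl; rewrite /=; lia.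
case: (leqP (size l) i) => hi; first by rewrite nth_default //; lia.
have := allP hall (nth 0 l i) (mem_nth 0 hi); rewrite /=; lia.
Qed.

Lemma skew_convex la mu i1 j1 i2 j2 i j :
  is_partition la -> is_partition mu ->
  in_skew la mu (i1, j1) -> in_skew la mu (i2, j2) ->
  i1 <= i <= i2 -> j1 <= j <= j2 -> in_skew la mu (i, j).
Proof.
move=> hla hmu; rewrite /in_skew /= => /andP [h1 /andP [h2 h3]] /andP [h4 /andP [h5 h6]] hi hj.
have e1 := @part_nth_mono mu i1.-1 i.-1 hmu ltac:(lia).
have e2 := @part_nth_mono la i.-1 i2.-1 hla ltac:(lia).
apply/andP; split; first lia. apply/andP; split; lia.
Qed.

Arguments skew_convex {la mu i1 j1 i2 j2 i j}.

Lemma mem_cells la mu x : is_partition la -> (x \in cells la mu) = in_skew la mu x.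
Proof.
move=> hla; rewrite /cells mem_filter.
case hx: (in_skew la mu x) => //=.
case: x hx => i j hx.
apply/allpairsPdep; exists i, j; split => //.
  rewrite mem_iota; move: hx; rewrite /in_skew /= => /andP [h1 /andP [h2 h3]].
  case: (leqP (size la) i.-1) => hs; first by rewrite nth_default in h3; lia.
  lia.
rewrite mem_iota; move: hx; rewrite /in_skew /= => /andP [h1 /andP [h2 h3]]; lia.
Qed.

Definition alpha (a : nat -> int) mu (m : cell) : int := (a m.2 - ((conj mu m.2)%:Z + 1) + m.1%:Z)%R.
Definition beta (b : nat -> int) la (M : cell) : int := (b M.2 - (conj la M.2)%:Z + M.1%:Z)%R.

Lemma lm_ex la mu r c y : is_partition la -> in_skew la mu y -> cont la r y = c ->
  exists m, leftmost_of_content la mu r c m.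
Proof.
move=> hla hy hc.
pose P := fun j => has (fun x => (x.2 == j) && (cont la r x == c)) (cells la mu).
have exP : exists j, P j.
  exists y.2; apply/hasP; exists y; first by rewrite mem_cells.
  by rewrite eqxx hc eqxx.
case: (ex_minnP exP) => j /hasP [x xin /andP [/eqP xj /eqP xc]] jmin.
exists x; split => //; first by rewrite -mem_cells.
move=> y' hy' hc'; rewrite xj; apply: jmin; apply/hasP; exists y'.
  by rewrite mem_cells.
by rewrite eqxx hc' eqxx.
Qed.

Lemma rm_ex la mu r c y : is_partition la -> in_skew la mu y -> cont la r y = c ->
  exists M, rightmost_of_content la mu r c M.
Proof.
move=> hla hy hc.
pose P := fun j => has (fun x => (x.2 == j) && (cont la r x == c)) (cells la mu).
have exP : exists j, P j.
  exists y.2; apply/hasP; exists y; first by rewrite mem_cells.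
  by rewrite eqxx hc eqxx.
have ubP : forall j, P j -> j <= nth 0 la 0.
  move=> j /hasP [x]; rewrite mem_cells // => hx /andP [/eqP <- _].
  move: hx; rewrite /in_skew => /andP [_ /andP [_ h]].
  exact: (leq_trans h (@part_nth_mono la 0 x.1.-1 hla (leq0n _))).
case: (ex_maxnP exP ubP) => j /hasP [x xin /andP [/eqP xj /eqP xc]] jmax.
exists x; split => //; first by rewrite -mem_cells.
move=> y' hy' hc'; rewrite xj; apply: jmax; apply/hasP; exists y'.
  by rewrite mem_cells.
by rewrite eqxx hc' eqxx.
Qed.

Lemma adj_cont la r x y : adj x y -> (cont la r y = cont la r x + 1 \/ cont la r y = cont la r x - 1)%R.
Proof.
case: x => i j; case: y => i' j'; rewrite /adj /cont /=.
case/orP => /andP [/eqP e /orP [/eqP e' | /eqP e']]; lia.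
Qed.

Lemma content_interval la mu r d g c : connected_skew la mu -> in_skew la mu d -> in_skew la mu g ->
  (cont la r d <= c)%R -> (c <= cont la r g)%R -> exists y, in_skew la mu y /\ cont la r y = c.
Proof.
move=> hc hd hg h1 h2.
have [s [hp hl hall]] := hc d g hd hg.
elim: s d hd h1 hp hl hall => [|y s IH] d hd h1 hp hl hall.
  by rewrite /= in hl; subst g; exists d; split => //; apply/eqP; rewrite eq_le h1 h2.
have [e|ne] := eqVneq (cont la r d) c; first by exists d.
move: hp => /= /andP [hdy hp].
move: hall => /= /andP [hy hall].
apply: (IH y) => //.
have := adj_cont la r d y hdy; move: h1 ne; lia.
Qed.
Arguments content_interval {la mu r d g c}.

Lemma flag_cond la mu N i j : is_partition la -> is_partition mu -> (nth 0 la 0 <= N) ->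
  in_skew la mu (i, j) -> in_skew la mu (i, j.+1) ->
  [/\ 1 <= j, j < N & conj mu j < conj la j.+1].
Proof.
move=> hla hmu hN; rewrite /in_skew /= => /andP [h1 /andP [h2 h3]] /andP [_ /andP [_ h4]].
have e := @part_nth_mono la 0 i.-1 hla (leq0n _).
have c1 := @conj_nth mu j i.-1 hmu ltac:(lia).
have c2 := @conj_nth la j.+1 i.-1 hla ltac:(lia).
split; lia.
Qed.

Arguments flag_cond {la mu N i j}.

Lemma step_a la mu r N a b c1 c2 m m' :
  is_partition la -> is_partition mu -> (nth 0 la 0 <= N) -> column_flags la mu N a b ->
  leftmost_of_content la mu r c1 m -> leftmost_of_content la mu r c2 m' ->
  c2 = (c1 + 1)%R -> (alpha a mu m - alpha a mu m' <= 1)%R.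
Proof.
move=> hla hmu hN hfl [hm hc hmin] [hm' hc' hmin'] e.
case: m hm hc hmin => i j hm hc hmin; case: m' hm' hc' hmin' => i' j' hm' hc' hmin'.
have ee : (j' + i = j + i' + 1)%N by move: hc hc' e; rewrite /cont /=; lia.
have j0 : 0 < j by move: hm; rewrite /in_skew /=; lia.
have i0 : 0 < i by move: hm; rewrite /in_skew /=; lia.
case: (ltngtP j' j) => hj.
- have hs : in_skew la mu (i.-1, j.-1).
    apply: (skew_convex hla hmu hm' hm); lia.
  have := hmin _ hs; rewrite /cont /= in hc *.
  move=> /(_ ltac:(lia)) /=; lia.
- have hs : in_skew la mu (i, j.+1).
    apply: (skew_convex hla hmu hm hm'); lia.
  have := hmin' _ hs; rewrite /cont /= in hc' *.
  move=> /(_ ltac:(lia)) /= hj2.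
  have ej : j' = j.+1 by lia.
  have ei : i' = i by lia.
  subst j' i'.
  have [f1 f2 f3] := flag_cond hla hmu hN hm hs.
  have [fa _] := hfl j f1 f2 f3.
  rewrite /alpha /=; lia.
- subst j'; have ei : i' = i.-1 by lia.
  subst i'; rewrite /alpha /=; lia.
Qed.

Lemma step_b la mu r N a b c1 c2 M M' :
  is_partition la -> is_partition mu -> (nth 0 la 0 <= N) -> column_flags la mu N a b ->
  rightmost_of_content la mu r c1 M -> rightmost_of_content la mu r c2 M' ->
  c2 = (c1 + 1)%R -> (beta b la M - beta b la M' <= 1)%R.
Proof.
move=> hla hmu hN hfl [hm hc hmax] [hm' hc' hmax'] e.
case: M hm hc hmax => i j hm hc hmax; case: M' hm' hc' hmax' => i' j' hm' hc' hmax'.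
have ee : (j' + i = j + i' + 1)%N by move: hc hc' e; rewrite /cont /=; lia.
have j0 : 0 < j by move: hm; rewrite /in_skew /=; lia.
have i0 : 0 < i by move: hm; rewrite /in_skew /=; lia.
case: (ltngtP j' j.+1) => hj.
- have hs : in_skew la mu (i.-1, j).
    apply: (skew_convex hla hmu hm' hm); lia.
  have := hmax' _ hs; rewrite /cont /= in hc' *.
  move=> /(_ ltac:(lia)) /= hj2.
  have ej : j' = j by lia.
  have ei : i' = i.-1 by lia.
  subst j' i'; rewrite /beta /=; lia.
- have hs : in_skew la mu (i.+1, j.+1).
    apply: (skew_convex hla hmu hm hm'); lia.
  have := hmax _ hs; rewrite /cont /= in hc *.
  move=> /(_ ltac:(lia)) /=; lia.
- subst j'; have ei : i' = i by lia.
  subst i'.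
  have [f1 f2 f3] := flag_cond hla hmu hN hm hm'.
  have [_ fb] := hfl j f1 f2 f3.
  rewrite /beta /=; lia.
Qed.
Arguments step_a {la mu r N a b c1 c2 m m'}.
Arguments step_b {la mu r N a b c1 c2 M M'}.
Arguments lm_ex {la mu} r {c y}.
Arguments rm_ex {la mu} r {c y}.

Lemma lm_unique la mu r c m m' :
  leftmost_of_content la mu r c m -> leftmost_of_content la mu r c m' -> m = m'.
Proof.
case: m => i j; case: m' => i' j' [h1 h2 h3] [h1' h2' h3'].
have := h3 _ h1' h2'; have := h3' _ h1 h2; move: h2 h2'; rewrite /cont /= => e1 e2 ha hb.
have ej : j = j' by lia.
have ei : i = i' by subst; lia.
by rewrite ej ei.
Qed.

Lemma rm_unique la mu r c m m' :
  rightmost_of_content la mu r c m -> rightmost_of_content la mu r c m' -> m = m'.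
Proof.
case: m => i j; case: m' => i' j' [h1 h2 h3] [h1' h2' h3'].
have := h3 _ h1' h2'; have := h3' _ h1 h2; move: h2 h2'; rewrite /cont /= => e1 e2 ha hb.
have ej : j = j' by lia.
have ei : i = i' by subst; lia.
by rewrite ej ei.
Qed.

Arguments lm_unique {la mu r c m m'}.
Arguments rm_unique {la mu r c m m'}.

Lemma tele_a la mu r N a b (n : nat) : forall c1 c2 m m',
  is_partition la -> is_partition mu -> (nth 0 la 0 <= N) -> column_flags la mu N a b ->
  connected_skew la mu ->
  leftmost_of_content la mu r c1 m -> leftmost_of_content la mu r c2 m' ->
  c2 = (c1 + n%:Z)%R -> (alpha a mu m - alpha a mu m' <= n%:Z)%R.
Proof.
elim: n => [|n IH] c1 c2 m m' hla hmu hN hfl hcon hm hm' e.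
  rewrite addr0 in e; subst c2.
  by rewrite (lm_unique hm hm') subrr.
have [hm1 hc1 _] := hm; have [hm1' hc1' _] := hm'.
have [y [hy hcy]] := @content_interval la mu r m m' (c1 + n%:Z)%R hcon hm1 hm1'
  ltac:(lia) ltac:(lia).
have [m'' hm''] := lm_ex r hla hy hcy.
have h1 := IH c1 (c1 + n%:Z)%R m m'' hla hmu hN hfl hcon hm hm'' erefl.
have h2 := step_a hla hmu hN hfl hm'' hm' ltac:(lia).
lia.
Qed.

Lemma tele_b la mu r N a b (n : nat) : forall c1 c2 m m',
  is_partition la -> is_partition mu -> (nth 0 la 0 <= N) -> column_flags la mu N a b ->
  connected_skew la mu ->
  rightmost_of_content la mu r c1 m -> rightmost_of_content la mu r c2 m' ->
  c2 = (c1 + n%:Z)%R -> (beta b la m - beta b la m' <= n%:Z)%R.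
Proof.
elim: n => [|n IH] c1 c2 m m' hla hmu hN hfl hcon hm hm' e.
  rewrite addr0 in e; subst c2.
  by rewrite (rm_unique hm hm') subrr.
have [hm1 hc1 _] := hm; have [hm1' hc1' _] := hm'.
have [y [hy hcy]] := @content_interval la mu r m m' (c1 + n%:Z)%R hcon hm1 hm1'
  ltac:(lia) ltac:(lia).
have [m'' hm''] := rm_ex r hla hy hcy.
have h1 := IH c1 (c1 + n%:Z)%R m m'' hla hmu hN hfl hcon hm hm'' erefl.
have h2 := step_b hla hmu hN hfl hm'' hm' ltac:(lia).
lia.
Qed.

Theorem proposition5p5 (la mu : seq nat) (r : int) (N : nat) (a b : nat -> int)
    (Th : seq (pred cell)) :
  is_partition la -> is_partition mu -> subpart mu la ->
  connected_skew la mu ->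
  (nth 0 la 0 <= N)%N ->
  column_flags la mu N a b ->
  outer_ribbon_decomposition la mu Th ->
  forall (i j : nat) (d g : cell),
    (i < size Th)%N -> (j < size Th)%N ->
    is_head la mu (Th_at Th i) d -> is_tail la mu (Th_at Th j) g ->
    (cont la r d <= cont la r g)%R ->
    forall a' b' : nat -> int,
      induced_flags la mu r Th a b (cont la r d) (cont la r g) a' b' ->
      column_flags (strip_kappa la mu r Th (cont la r d) (cont la r g))
                   (strip_nu la mu r Th (cont la r d) (cont la r g))
                   (strip_K la mu r Th (cont la r d) (cont la r g)) a' b'.
Proof.
move=> hla hmu _ hcon hN hfl [hdec _ _] i j d g hi hj hhead htail hpq a' b' hind.
have hd : in_skew la mu d.
  have [_ hin _ _] := hdec i hi; apply: hin; by case/andP: hhead.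
have hg : in_skew la mu g.
  have [_ hin _ _] := hdec j hj; apply: hin; by case/andP: htail.
move: hind hpq; set p := cont la r d; set q := cont la r g => hind hpq.
rewrite /induced_flags in hind; rewrite /column_flags.
set up := strip_up la mu r Th p.
set L := strip_len p q.
have eL : q = (p + L%:Z)%R by rewrite /L /strip_len; lia.
change (strip_kappa la mu r Th p q) with (gkappa up L) in hind.
change (strip_kappa la mu r Th p q) with (gkappa up L).
change (strip_nu la mu r Th p q) with (gnu up L) in hind.
change (strip_nu la mu r Th p q) with (gnu up L).
change (strip_K la mu r Th p q) with (gK up L) in hind.
change (strip_K la mu r Th p q) with (gK up L).
move=> s s1 sK _.
have [t1 [t1L ct1 e1]] := @gtop up L s s1 (ltnW sK).
have [t2 [t2L ct2 e2]] := @gtop up L s.+1 (ltn0Sn _) sK.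
have [u1 [u1L cu1 f1]] := @gbot up L s s1 (ltnW sK).
have [u2 [u2L cu2 f2]] := @gbot up L s.+1 (ltn0Sn _) sK.
have lt12 : t1 < t2 by apply: (gcol_lt up); rewrite ct1 ct2.
have ltu12 : u1 < u2 by apply: (gcol_lt up); rewrite cu1 cu2.
have ht1 := @gcont up L p t1 t1L; rewrite -e1 in ht1.
have ht2 := @gcont up L p t2 t2L; rewrite -e2 in ht2.
have hu1 := @gcont up L p u1 u1L; rewrite -f1 in hu1.
have hu2 := @gcont up L p u2 u2L; rewrite -f2 in hu2.
have ex c t : t <= L -> c = (p + t%:Z)%R -> exists2 y, in_skew la mu y & cont la r y = c.
  move=> tL ->; have [y [hy hcy]] := @content_interval la mu r d g (p + t%:Z)%R hcon hd hg
    ltac:(lia) ltac:(lia).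
  by exists y.
have [y1 hy1 hcy1] := ex _ _ t1L ht1.
have [y2 hy2 hcy2] := ex _ _ t2L ht2.
have [z1 hz1 hcz1] := ex _ _ u1L hu1.
have [z2 hz2 hcz2] := ex _ _ u2L hu2.
have [m1 hm1] := lm_ex r hla hy1 hcy1.
have [m2 hm2] := lm_ex r hla hy2 hcy2.
have [M1 hM1] := rm_ex r hla hz1 hcz1.
have [M2 hM2] := rm_ex r hla hz2 hcz2.
have [ea1 eb1] := hind s ltac:(lia) m1 M1 hm1 hM1.
have [ea2 eb2] := hind s.+1 ltac:(lia) m2 M2 hm2 hM2.
split.
  have := @tele_a la mu r N a b (t2 - t1)%N _ _ m1 m2 hla hmu hN hfl hcon hm1 hm2 ltac:(lia).
  rewrite ea1 ea2 /alpha; move: ht1 ht2; rewrite /cont /=; lia.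
have := @tele_b la mu r N a b (u2 - u1)%N _ _ M1 M2 hla hmu hN hfl hcon hM1 hM2 ltac:(lia).
rewrite eb1 eb2 /beta; move: hu1 hu2; rewrite /cont /=; lia.
Qed.
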